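(* Suppose that either (1) the cost function $C$ is submodular and all valuations are supermodular, or (2) $C$ is submodular and player-wise symmetric and all valuations are symmetric. Then the Sequential Mechanism is groupstrategyproof, $1$-budget-balanced (i.e. $\sum_ip_i=C(\overrightarrow{ALG})$), is an $n$-approximation to the social cost, and satisfies individual rationality and no positive transfers.
   Context: Setting. $N=\{1,\dots,n\}$ is a set of players and $M_1,\dots,M_n$ are pairwise disjoint finite sets; $M=\bigcup_i M_i$; allocations $\vec S=(S_1,\dots,S_n)$ with $S_i\subseteq M_i$ are identified with subsets of $M$, with componentwise set operations. A cost function is a monotone $C:2^M\to\mathbb{R}_{\ge0}$ with $C(\emptyset)=0$; valuations $v_i:2^{M_i}\to\mathbb{R}_{\ge0}$ are monotone with $v_i(\emptyset)=0$. Sequential Mechanism: start with $ALG_i=\emptyset$ for all $i$. For $i=1,\dots,n$ in order: let $\mathcal A_i=\arg\max_{S\subseteq M_i}v_i(S)-[C(\overrightarrow{ALG}\cup S)-C(\overrightarrow{ALG})]$ (with $\overrightarrow{ALG}$ the current allocation, in which only players $1,\dots,i-1$ have been assigned), set $ALG_i$ to an element of $\mathcal A_i$ of maximum cardinality, and charge $p_i=C(ALG_1,\dots,ALG_i)-C(ALG_1,\dots,ALG_{i-1})$. Groupstrategyproof: for every $K\subseteq N$ and every joint misreport by $K$ (other players reporting truthfully), if $v_i(S_i)-p_i\le v_i(S'_i)-p'_i$ for all $i\in K$ then equality holds for all $i\in K$, where $(\vec S,\vec p)$ and $(\vec S',\vec p')$ are the outputs under truthful reports and under the misreport. Individual rationality: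 $p_i\le v_i(ALG_i)$; no positive transfers: $p_i\ge0$. Social cost $\pi(\vec S)=C(\vec S)+\sum_i[v_i(M_i)-v_i(S_i)]$; $n$-approximation: $\pi(\overrightarrow{ALG})\le n\min_{\vec S}\pi(\vec S)$ for all profiles. Supermodular $v$: $v(S)+v(T)\le v(S\cup T)+v(S\cap T)$; submodular $C$: $C(S)+C(T)\ge C(S\cup T)+C(S\cap T)$. Symmetric valuation: $v_i(S)=v_i(T)$ whenever $|S|=|T|$. Player-wise symmetric cost: $C(\vec S)=C(\vec T)$ whenever $|S_i|=|T_i|$ for all $i$. *)

(* Defs.v *)
(* Real-valued costs/valuations are taken in an arbitrary
   realFieldType R (the statement is purely order-algebraic). *)
From HB Require Import structures.
From mathcomp Require Import all_boot all_order all_algebra.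
Set Implicit Arguments. Unset Strict Implicit. Unset Printing Implicit Defensive.
Import Order.TTheory GRing.Theory Num.Theory.
Local Open Scope ring_scope.

Section Mech.
Variables (R : realFieldType) (n : nat) (M : finType) (own : M -> 'I_n).

Definition Mi (i : 'I_n) : {set M} := [set x | own x == i].

Definition is_cost (C : {set M} -> R) : Prop :=
  [/\ C set0 = 0,
      (forall S, 0 <= C S) &
      (forall S T : {set M}, S \subset T -> C S <= C T)].

(* valuation of player i on 2^{M_i} (values outside 2^{M_i} are never used) *)
Definition is_valuation (i : 'I_n) (vi : {set M} -> R) : Prop :=
  [/\ vi set0 = 0,
      (forall S : {set M}, S \subset Mi i -> 0 <= vi S) &
      (forall S T : {set M}, S \subset T -> T \subset Mi i -> vi S <= vi T)].

Definition supermodular_val (i : 'I_n) (vi : {set M} -> R) : Prop :=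
  forall S T : {set M}, S \subset Mi i -> T \subset Mi i ->
    vi S + vi T <= vi (S :|: T) + vi (S :&: T).

Definition submodular_cost (C : {set M} -> R) : Prop :=
  forall S T : {set M}, C S + C T >= C (S :|: T) + C (S :&: T).

Definition symmetric_val (i : 'I_n) (vi : {set M} -> R) : Prop :=
  forall S T : {set M}, S \subset Mi i -> T \subset Mi i ->
    #|S| = #|T| -> vi S = vi T.

Definition playerwise_symmetric_cost (C : {set M} -> R) : Prop :=
  forall S T : {set M}, (forall i, #|S :&: Mi i| = #|T :&: Mi i|) -> C S = C T.

(* allocation of players 1..k (0-based: players j with j < k) *)
Definition prefix (alg : 'I_n -> {set M}) (k : nat) : {set M} :=
  \bigcup_(j : 'I_n | (j < k)%N) alg j.

Definition allocation (alg : 'I_n -> {set M}) : {set M} := prefix alg n.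

(* (alg, p) is a possible output of the Sequential Mechanism on the reported
   valuations b (ties among maximum-cardinality maximizers broken arbitrarily). *)
Definition seq_outcome (C : {set M} -> R) (b : 'I_n -> {set M} -> R)
    (alg : 'I_n -> {set M}) (p : 'I_n -> R) : Prop :=
  forall i : 'I_n,
    let A := prefix alg i in
    let u := fun S => b i S - (C (A :|: S) - C A) in
    [/\ alg i \subset Mi i,
        (forall S : {set M}, S \subset Mi i -> u S <= u (alg i)),
        (forall S : {set M}, S \subset Mi i -> u S = u (alg i) -> (#|S| <= #|alg i|)%N) &
        p i = C (A :|: alg i) - C A].

Definition social_cost (C : {set M} -> R) (v : 'I_n -> {set M} -> R)
    (S : {set M}) : R :=
  C S + \sum_(i < n) (v i (Mi i) - v i (S :&: Mi i)).

Definition groupstrategyproof (C : {set M} -> R) (v : 'I_n -> {set M} -> R)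
    : Prop :=
  forall (K : {set 'I_n}) (b : 'I_n -> {set M} -> R),
    (forall i, i \notin K -> b i = v i) ->
    (forall i, i \in K -> is_valuation i (b i)) ->
    forall alg p alg' p',
      seq_outcome C v alg p -> seq_outcome C b alg' p' ->
      (forall i, i \in K -> v i (alg i) - p i <= v i (alg' i) - p' i) ->
      (forall i, i \in K -> v i (alg i) - p i = v i (alg' i) - p' i).

End Mech.

(* Main.v *)
Require Import Defs.
From HB Require Import structures.
From mathcomp Require Import all_boot all_order all_algebra.
From mathcomp Require Import ring lra.
Import Order.TTheory GRing.Theory Num.Theory.
Local Open Scope ring_scope.

Ltac bsolve := repeat match goal with
 | H : is_true true -> _ |- _ => specialize (H isT)
 | H : is_true false |- _ => discriminate H
 | H : False |- _ => contradiction
 end.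

Section H.
Variables (R : realFieldType) (n : nat) (M : finType) (own : M -> 'I_n) (C : {set M} -> R).

Lemma prefix0 (alg : 'I_n -> {set M}) : Defs.prefix alg 0%N = set0.
Proof. by apply/setP=> x; rewrite inE; apply/bigcupP => -[j]. Qed.

Lemma prefixS (alg : 'I_n -> {set M}) (i : 'I_n) : Defs.prefix alg i.+1 = Defs.prefix alg i :|: alg i.
Proof.
apply/setP=> x; rewrite inE; apply/bigcupP/orP.
- case=> j; rewrite ltnS leq_eqVlt => /orP[/eqP ji|ji] xj.
    by right; have <-: j = i by apply: val_inj.
  by left; apply/bigcupP; exists j.
- case=> [/bigcupP [j ji xj]|xi]; first by exists j => //; apply: ltnW.
  by exists i.
Qed.

Lemma prefix_sub (alg : 'I_n -> {set M}) k : (forall j, alg j \subset Mi own j) ->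
  Defs.prefix alg k \subset [set x | (own x < k)%N].
Proof.
move=> H; apply/subsetP => x /bigcupP[j jk xj].
by have := subsetP (H j) x xj; rewrite !inE => /eqP ->.
Qed.

Lemma alloc_Mi (alg : 'I_n -> {set M}) (i : 'I_n) : (forall j, alg j \subset Mi own j) ->
  allocation alg :&: Mi own i = alg i.
Proof.
move=> H; apply/setP=> x; rewrite inE; apply/andP/idP.
- case=> /bigcupP[j _ xj]; have := subsetP (H j) x xj; rewrite !inE => /eqP -> /eqP ji.
  by rewrite -ji.
- move=> xi; split; last exact: subsetP (H i) x xi.
  by apply/bigcupP; exists i.
Qed.

Lemma dmono (A B S T : {set M}) : submodular_cost C -> B \subset A -> S \subset T ->
  (forall x, x \in T -> x \in A -> False) ->
  C (A :|: T) - C (A :|: S) <= C (B :|: T) - C (B :|: S).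
Proof.
move=> sub hBA hST hd.
have := sub (B :|: T) (A :|: S).
have ->: (B :|: T) :|: (A :|: S) = A :|: T.
  apply/setP=> x; rewrite !inE; move: (subsetP hBA x) (subsetP hST x) (hd x).
  by case: (x \in A); case: (x \in B); case: (x \in S); case: (x \in T) => //= *; bsolve.
have ->: (B :|: T) :&: (A :|: S) = B :|: S.
  apply/setP=> x; rewrite !inE; move: (subsetP hBA x) (subsetP hST x) (hd x).
  by case: (x \in A); case: (x \in B); case: (x \in S); case: (x \in T) => //= *; bsolve.
move=> h; lra.
Qed.

Arguments dmono {A B S T}.
Lemma inMi x i : (x \in Mi own i) = (own x == i).
Proof. by rewrite inE. Qed.

Definition uu (A : {set M}) (vi : {set M} -> R) S := vi S - (C (A :|: S) - C A).

Lemma util_le (i : 'I_n) (A B Z X : {set M}) vi : submodular_cost C -> B \subset A ->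
  (forall x, x \in Mi own i -> x \in A -> False) -> Z \subset Mi own i ->
  (forall S : {set M}, S \subset Mi own i -> uu A vi S <= uu A vi X) ->
  uu B vi Z <= uu A vi X.
Proof.
move=> sub hBA hd hZ hmax.
have := dmono sub hBA (sub0set Z) (fun x xZ => hd x (subsetP hZ x xZ)).
rewrite !setU0 => h; have := hmax Z hZ; rewrite /uu; lra.
Qed.

Lemma sym_swap (i : 'I_n) (D Y Z : {set M}) : playerwise_symmetric_cost own C ->
  (forall x, x \in Mi own i -> x \in D -> False) -> Y \subset Mi own i -> Z \subset Mi own i ->
  #|Y| = #|Z| -> C (D :|: Y) = C (D :|: Z).
Proof.
move=> H hd hY hZ hc; apply: H => j.
case: (eqVneq j i) => [->|ji].
  have E: forall W : {set M}, W \subset Mi own i -> (D :|: W) :&: Mi own i = W.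
    move=> W hW; apply/setP=> x; rewrite !inE; move: (hd x) (subsetP hW x); rewrite ?inMi.
    by case: (own x == i); case: (x \in D); case: (x \in W) => //= *; bsolve.
  by rewrite !E.
have E: forall W : {set M}, W \subset Mi own i -> (D :|: W) :&: Mi own j = D :&: Mi own j.
  move=> W hW; apply/setP=> x; rewrite !inE; move: (subsetP hW x); rewrite ?inMi.
  case: (eqVneq (own x) j) => [oj|_]; last by move=> _; rewrite !andbF.
  rewrite !andbT => h; case xW: (x \in W); last by rewrite orbF.
  by move: (h xW); rewrite oj (negbTE ji).
by rewrite !E.
Qed.

Arguments sym_swap {i D Y Z}.
Lemma ext_card (X Q : {set M}) k : X \subset Q -> (#|X| <= k)%N -> (k <= #|Q|)%N ->
  exists Y : {set M}, [/\ X \subset Y, Y \subset Q & #|Y| = k].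
Proof.
move=> hXP h1 h2; rewrite -(subnK h1) in h2 *.
move: (k - #|X|)%N h2 => m h2; clear h1; elim: m X hXP h2 => [|m IH] X hXP h2.
  by exists X; rewrite add0n.
have : X \proper Q by rewrite properEcard hXP; apply: leq_trans h2; rewrite addSn ltnS leq_addl.
case/properP=> _ [x xQ xX].
have s1 : x |: X \subset Q by rewrite subUset sub1set xQ.
have s2 : (m + #|x |: X| <= #|Q|)%N by rewrite cardsU1 xX add1n -addSnnS.
have [Y [h3 h4 h5]] := IH (x |: X) s1 s2.
exists Y; split => //; first exact: subset_trans (subsetUr _ _) h3.
by rewrite h5 cardsU1 xX add1n addSnnS.
Qed.

Arguments ext_card {X Q k}.
Lemma step (i : 'I_n) (A B X Z : {set M}) (vi : {set M} -> R) :
  submodular_cost C ->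
  (supermodular_val own i vi \/ (playerwise_symmetric_cost own C /\ symmetric_val own i vi)) ->
  B \subset A -> (forall x, x \in Mi own i -> x \in A -> False) ->
  X \subset Mi own i -> Z \subset Mi own i ->
  (forall S : {set M}, S \subset Mi own i -> uu A vi S <= uu A vi X) ->
  (forall S : {set M}, S \subset Mi own i -> uu A vi S = uu A vi X -> (#|S| <= #|X|)%N) ->
  ((forall S : {set M}, S \subset Mi own i -> uu B vi S <= uu B vi Z) \/ uu A vi X <= uu B vi Z) ->
  exists Y : {set M}, Y \subset X /\ forall D : {set M},
     (forall x, x \in Mi own i -> x \in D -> False) -> C (D :|: Z) = C (D :|: Y).
Proof.
move=> sub cas hBA hd hX hZ hmax hcard hK.
have hdB : forall x, x \in Mi own i -> x \in B -> False := fun x a b => hd x a (subsetP hBA x b).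
have hdT : forall T : {set M}, T \subset Mi own i -> forall x, x \in T -> x \in A -> False :=
  fun T hT x a b => hd x (subsetP hT x a) b.
have dm : forall S T : {set M}, S \subset T -> T \subset Mi own i ->
    C (A :|: T) - C (A :|: S) <= C (B :|: T) - C (B :|: S) :=
  fun S T hST hT => dmono sub hBA hST (hdT T hT).
have dm0 : uu B vi Z <= uu A vi Z.
  by have := dm set0 Z (sub0set Z) hZ; rewrite !setU0 /uu => h; lra.
case: cas => [sup | [psym vsym]].
- have hXZ : X :&: Z \subset Mi own i := subset_trans (subsetIl X Z) hX.
  have hUZ : X :|: Z \subset Mi own i by rewrite subUset hX.
  have supA : uu A vi X + uu A vi Z <= uu A vi (X :|: Z) + uu A vi (X :&: Z).
    have h1 := sup X Z hX hZ.
    have h2 := sub (A :|: X) (A :|: Z).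
    rewrite -setUIr in h2.
    have e : (A :|: X) :|: (A :|: Z) = A :|: (X :|: Z).
      by apply/setP=> x; rewrite !inE; case: (x \in A); case: (x \in X); case: (x \in Z).
    rewrite e in h2; rewrite /uu; lra.
  have key : 0 <= uu A vi Z - uu A vi (X :&: Z).
    case: hK => [hB | hK].
    + have := dm (X :&: Z) Z (subsetIr X Z) hZ; have := hB (X :&: Z) hXZ; rewrite /uu; lra.
    + have := hmax _ hXZ; move: hK dm0; rewrite /uu; lra.
  have hU : uu A vi (X :|: Z) = uu A vi X.
    by have := hmax _ hUZ; move: supA key; lra.
  have hc := hcard _ hUZ hU.
  have : X == X :|: Z by rewrite eqEcard subsetUl hc.
  move/eqP => eXZ.
  exists Z; split => //; rewrite eXZ; exact: subsetUr.
- have symA : forall S T : {set M}, S \subset Mi own i -> T \subset Mi own i -> #|S| = #|T| ->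
      uu A vi S = uu A vi T.
    by move=> S T hS hT hc; rewrite /uu (vsym S T hS hT hc) (sym_swap psym hd hS hT hc).
  have symB : forall S T : {set M}, S \subset Mi own i -> T \subset Mi own i -> #|S| = #|T| ->
      uu B vi S = uu B vi T.
    by move=> S T hS hT hc; rewrite /uu (vsym S T hS hT hc) (sym_swap psym hdB hS hT hc).
  have hc : (#|Z| <= #|X|)%N.
    case: hK => [hB|hK].
    + rewrite leqNgt; apply/negP => lt.
      have [Y [h3 h4 h5]] := ext_card hX (ltnW lt) (subset_leq_card hZ).
      have e1 : uu B vi Y = uu B vi Z := symB Y Z h4 hZ h5.
      have h6 := hB X hX. have h7 := dm X Y h3 h4. have h8 := hmax Y h4.
      have : uu A vi Y = uu A vi X by move: e1 h6 h7 h8; rewrite /uu; lra.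
      by move/(hcard Y h4); rewrite h5 leqNgt lt.
    + apply: (hcard Z hZ); have := hmax Z hZ; move: hK dm0; lra.
  have c0 : (#|(set0 : {set M})| <= #|Z|)%N by rewrite cards0.
  have [Y [_ h4 h5]] := ext_card (sub0set X) c0 hc.
  exists Y; split => // D hD.
  exact: sym_swap psym hD hZ (subset_trans h4 hX) (esym h5).
Qed.

Arguments step {i A B X Z vi}.
Lemma inv_gsp (v b : 'I_n -> {set M} -> R) (K : {set 'I_n})
  (alg alg' : 'I_n -> {set M}) (p p' : 'I_n -> R) :
  submodular_cost C ->
  (forall i, supermodular_val own i (v i) \/
             (playerwise_symmetric_cost own C /\ symmetric_val own i (v i))) ->
  (forall i, i \notin K -> b i = v i) ->
  seq_outcome own C v alg p -> seq_outcome own C b alg' p' ->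
  (forall i, i \in K -> v i (alg i) - p i <= v i (alg' i) - p' i) ->
  forall k, (k <= n)%N -> exists B : {set M}, B \subset Defs.prefix alg k /\
    forall S : {set M}, S \subset [set x | (k <= own x)%N] ->
      C (Defs.prefix alg' k :|: S) = C (B :|: S).
Proof.
move=> sub cas hb o o' hK; elim=> [|k IH] hk.
  by exists set0; rewrite prefix0 sub0set; split=> // S _; rewrite prefix0.
have kn : (k < n)%N by [].
have [B [hB hS]] := IH (ltnW hk).
pose i := Ordinal kn.
have ki : k = i by [].
have [hX hmax hcard hp] := o i.
have [hZ hmax' hcard' hp'] := o' i.
rewrite -/(Defs.prefix alg i) -/(Defs.prefix alg' i) -ki in hmax hcard hp hmax' hcard' hp'.
set A := Defs.prefix alg k in hB hmax hcard hp *.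
set A' := Defs.prefix alg' k in hS hmax' hcard' hp' *.
have algsub : forall j, alg j \subset Mi own j by move=> j; have [] := o j.
have Miup : Mi own i \subset [set x | (k <= own x)%N].
  by apply/subsetP=> x; rewrite !inE => /eqP ->.
have hd : forall x, x \in Mi own i -> x \in A -> False.
  move=> x; rewrite inE => /eqP ox xA; have := subsetP (prefix_sub alg k algsub) x xA.
  by rewrite inE ox ltnn.
have eS : forall S : {set M}, S \subset Mi own i -> C (A' :|: S) = C (B :|: S).
  by move=> S hS'; apply: hS; apply: subset_trans hS' Miup.
have e0 : C A' = C B by have := eS set0 (sub0set _); rewrite !setU0.
have hK' : (forall S : {set M}, S \subset Mi own i -> uu B (v i) S <= uu B (v i) (alg' i))
           \/ uu A (v i) (alg i) <= uu B (v i) (alg' i).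
  case: (boolP (i \in K)) => iK.
    right; have := hK i iK; rewrite hp hp' /uu e0 (eS _ hZ); lra.
  left=> S hS'; have := hmax' S hS'; rewrite (hb i iK) /uu e0 !eS //.
have [Y [hYX hY]] := step sub (cas i) hB hd hX hZ hmax hcard hK'.
exists (B :|: Y); split.
  rewrite ki prefixS -ki; apply: setUSS => //.
move=> S hS'.
rewrite ki prefixS -ki -/A'.
have hZS : alg' i :|: S \subset [set x | (k <= own x)%N].
  rewrite subUset (subset_trans hZ Miup) /=; apply: subset_trans hS' _.
  by apply/subsetP=> x; rewrite !inE; apply: ltnW.
rewrite -setUA hS // setUCA setUA -setUA setUC hY; first by rewrite setUAC.
move=> x xi; rewrite inE => /orP[xB|xS].
  exact: hd x xi (subsetP hB x xB).
move: (subsetP hS' x xS) xi; rewrite !inE => h /eqP oi.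
by move: h; rewrite oi ltnn.
Qed.

Lemma budget (v : 'I_n -> {set M} -> R) (alg : 'I_n -> {set M}) p :
  seq_outcome own C v alg p -> C set0 = 0 ->
  \sum_(i < n) p i = C (allocation alg).
Proof.
move=> o c0.
suff H : forall k, (k <= n)%N -> \sum_(i < n | (i < k)%N) p i = C (Defs.prefix alg k).
  rewrite /allocation -H //; apply: eq_bigl => i; by rewrite ltn_ord.
elim=> [|k IH] hk.
  by rewrite big_pred0 ?prefix0 // => i; rewrite ltn0.
pose i := Ordinal hk.
have ki : k = i by [].
rewrite (bigD1 i) //=.
rewrite (eq_bigl (fun j : 'I_n => (j < k)%N)); last first.
  by move=> j /=; rewrite ltnS leq_eqVlt -val_eqE /=; case: ltngtP.
rewrite IH ?(ltnW hk) //.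
have [_ _ _ hp] := o i.
by rewrite hp ki prefixS; ring.
Qed.

Arguments budget {v alg p}.
Lemma ir_npt (v : 'I_n -> {set M} -> R) (alg : 'I_n -> {set M}) p :
  is_cost C -> (forall i, is_valuation own i (v i)) ->
  seq_outcome own C v alg p -> forall i, p i <= v i (alg i) /\ 0 <= p i.
Proof.
move=> [c0 cpos cmono] val o i.
have [hX hmax _ hp] := o i.
have [v0 _ _] := val i.
split.
  have := hmax set0 (sub0set _); rewrite setU0 v0 hp; lra.
by rewrite hp subr_ge0; apply: cmono; apply: subsetUl.
Qed.

Lemma approx (v : 'I_n -> {set M} -> R) (alg : 'I_n -> {set M}) p :
  is_cost C -> (forall i, is_valuation own i (v i)) -> submodular_cost C ->
  seq_outcome own C v alg p -> forall S,
  social_cost own C v (allocation alg) <= n%:R * social_cost own C v S.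
Proof.
move=> hc val sub o S.
have [c0 cpos cmono] := hc.
have algsub : forall j, alg j \subset Mi own j by move=> j; have [] := o j.
rewrite /social_cost -(budget o c0) -big_split /=.
have -> : n%:R * (C S + \sum_(i < n) (v i (Mi own i) - v i (S :&: Mi own i))) =
          \sum_(i < n) (C S + \sum_(i < n) (v i (Mi own i) - v i (S :&: Mi own i))).
  by rewrite sumr_const card_ord mulr_natl.
apply: ler_sum => i _.
rewrite alloc_Mi //.
have [hX hmax _ hp] := o i.
set A := Defs.prefix alg i in hmax hp.
set T := S :&: Mi own i.
have hT : T \subset Mi own i by apply: subsetIr.
have h1 := hmax T hT.
have hd : forall x, x \in T -> x \in A -> False.
  move=> x xT xA; have := subsetP (prefix_sub alg i algsub) x xA.
  move: (subsetP hT x xT); rewrite !inE => /eqP ->; by rewrite ltnn.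
have := dmono sub (sub0set A) (sub0set T) hd.
rewrite !setU0 set0U c0 => h2.
have h3 : C T <= C S by apply: cmono; apply: subsetIl.
have h4 : v i (Mi own i) - v i T <= \sum_(j < n) (v j (Mi own j) - v j (S :&: Mi own j)).
  rewrite (bigD1 i) //= lerDl; apply: sumr_ge0 => j _.
  have [_ _ vm] := val j; rewrite subr_ge0; apply: vm => //; apply: subsetIr.
move: h1 h2 h3 h4; rewrite hp; lra.
Qed.

Definition bestP (i : 'I_n) (vi : {set M} -> R) (A X : {set M}) : bool :=
  [&& X \subset Mi own i,
      [forall S : {set M}, (S \subset Mi own i) ==> (uu A vi S <= uu A vi X)] &
      [forall S : {set M}, ((S \subset Mi own i) && (uu A vi S == uu A vi X)) ==> (#|S| <= #|X|)%N]].

Lemma ex_best i vi A : exists X, bestP i vi A X.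
Proof.
pose P := fun S : {set M} => S \subset Mi own i.
have P0 : P set0 by apply: sub0set.
have [X0 PX0 hX0] := @extremumP _ _ [rel x y : R | y <= x] set0 P (uu A vi)
   (fun x => lexx x) (fun y x z h1 h2 => le_trans h2 h1)
   (fun x y => le_total y x) P0.
have PP : P X0 && (uu A vi X0 == uu A vi X0) by rewrite PX0 eqxx.
have [X1 /andP[PX1 /eqP e1] hX1] := @arg_maxnP _ X0
   (fun S : {set M} => P S && (uu A vi S == uu A vi X0)) (fun S => #|S|) PP.
exists X1; apply/and3P; split => //.
  by apply/forallP => S; apply/implyP => PS; rewrite e1; exact: hX0 S PS.
apply/forallP => S; apply/implyP => /andP[PS /eqP eS].
by apply: hX1; rewrite /= /P PS eS e1 eqxx.
Qed.

Definition best i vi A := xchoose (ex_best i vi A).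

Fixpoint pre (v : 'I_n -> {set M} -> R) (k : nat) : {set M} :=
  match k with
  | 0 => set0
  | k.+1 => pre v k :|: (if insub k is Some i then best i (v i) (pre v k) else set0)
  end.

Definition alg0 v (i : 'I_n) := best i (v i) (pre v i).
Definition p0 v (i : 'I_n) := C (pre v i :|: alg0 v i) - C (pre v i).

Lemma pre_prefix v k : (k <= n)%N -> Defs.prefix (alg0 v) k = pre v k.
Proof.
elim: k => [|k IH] hk; first by rewrite prefix0.
pose i := Ordinal hk.
have ki : k = i by [].
by rewrite ki prefixS -ki IH ?(ltnW hk) //= ki valK.
Qed.

Lemma exists_outcome v : seq_outcome own C v (alg0 v) (p0 v).
Proof.
move=> i; rewrite pre_prefix ?(ltnW (ltn_ord i)) //.
have /and3P[h1 /forallP h2 /forallP h3] := xchooseP (ex_best i (v i) (pre v i)).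
split => //.
- by move=> S hS; have /implyP := h2 S; apply.
- by move=> S hS eS; have /implyP := h3 S; apply; rewrite hS /=; apply/eqP.
Qed.
End H.
Arguments prefix_sub {n M own alg k}.
Arguments util_le {R n M own C i A B Z X vi}.
Arguments budget {R n M own C v alg p}.
Arguments approx {R n M own C v alg p}.
Arguments ir_npt {R n M own C v alg p}.

Theorem theorem7p1 (R : realFieldType) (n : nat) (M : finType)
    (own : M -> 'I_n) (C : {set M} -> R) (v : 'I_n -> {set M} -> R) :
  is_cost C ->
  (forall i, is_valuation own i (v i)) ->
  (submodular_cost C /\ (forall i, supermodular_val own i (v i))) \/
  (submodular_cost C /\ playerwise_symmetric_cost own C /\
     (forall i, symmetric_val own i (v i))) ->
  [/\ (exists alg p, seq_outcome own C v alg p),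
      groupstrategyproof own C v &
      forall alg p, seq_outcome own C v alg p ->
        [/\ \sum_(i < n) p i = C (allocation alg),
            (forall S : {set M},
               social_cost own C v (allocation alg) <= n%:R * social_cost own C v S),
            (forall i, p i <= v i (alg i)) &
            (forall i, 0 <= p i)]].
Proof.
move=> hc val hcase.
have sub : submodular_cost C by case: hcase => [[]|[]].
have cas : forall i, supermodular_val own i (v i) \/
    (playerwise_symmetric_cost own C /\ symmetric_val own i (v i)).
  by move=> i; case: hcase => [[_ h]|[_ [h1 h2]]]; [left|right].
have [c0 _ _] := hc.
split.
- exists (@alg0 R n M own C v), (@p0 R n M own C v); exact: exists_outcome.
- move=> K b hb hbval alg p alg' p' o o' hK i iK.
  have [B [hB hS]] := @inv_gsp R n M own C v b K alg alg' p p' sub cas hb o o' hK i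
    (ltnW (ltn_ord i)).
  apply/eqP; rewrite eq_le hK //=.
  have [hX hmax _ hp] := o i.
  have [hZ _ _ hp'] := o' i.
  have algsub : forall j, alg j \subset Mi own j by move=> j; have [] := o j.
  have Miup : Mi own i \subset [set x | (i <= own x)%N].
    by apply/subsetP=> x; rewrite !inE => /eqP ->.
  have e1 := hS _ (subset_trans hZ Miup).
  have e0 := hS set0 (sub0set _); rewrite !setU0 in e0.
  have hd : forall x, x \in Mi own i -> x \in Defs.prefix alg i -> False.
    move=> x; rewrite inE => /eqP ox xA; have := subsetP (prefix_sub algsub) x xA.
    by rewrite inE ox ltnn.
  have h := util_le sub hB hd hZ hmax.
  rewrite hp hp' e1 e0; move: h; rewrite /uu; lra.
- move=> alg p o; split.
  + exact: budget o c0.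
  + exact: approx hc val sub o.
  + by move=> i; have [] := ir_npt hc val o i.
  + by move=> i; have [] := ir_npt hc val o i.
Qed.
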